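(* The functions $F_\iota(r,s,i,j)=j\,L^\iota(r)\,i$, $\iota=1,\dots,n$, form a regular sequence in the coordinate ring $\mathbb{C}[T^*(\mathfrak{b}\times\mathbb{C}^n)^{rss}]$.
   Context: $\mathfrak{b}$ is the space of upper triangular complex $n\times n$ matrices, $\mathfrak{b}^*=\mathfrak{gl}_n/\mathfrak{n}^+$ ($\mathfrak{n}^+$ strictly upper triangular), and $T^*(\mathfrak{b}\times\mathbb{C}^n)^{rss}=\mathfrak{b}^{rss}\times\mathfrak{b}^*\times\mathbb{C}^n\times(\mathbb{C}^n)^*$, where $\mathfrak{b}^{rss}$ is the open set of $r\in\mathfrak{b}$ with pairwise distinct diagonal entries; $i$ is a column vector and $j$ a row vector. $L^\iota(r)=\big[\operatorname{tr}\prod_{k\ne\iota}(r-r_{kk}I)\big]^{-1}\prod_{k\ne\iota}(r-r_{kk}I)$ (the scalar equals $\prod_{k\ne\iota}(r_{\iota\iota}-r_{kk})\neq0$). *)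

(* Defs.v *)
From HB Require Import structures.
From mathcomp Require Import all_boot all_order all_algebra complex.
From mathcomp Require Import reals.
Set Implicit Arguments. Unset Strict Implicit. Unset Printing Implicit Defensive.
Import Order.TTheory GRing.Theory Num.Theory.
Local Open Scope ring_scope.

Section Defs.
Variable R : realType.
Local Notation C := (R[i]).
Variable n : nat.

(* Points of T^*(b x C^n)^{rss} = b^{rss} x b^* x C^n x (C^n)^*.
   r : upper triangular with pairwise distinct diagonal entries;
   s : element of b^* = gl_n / n^+, represented by its canonical
       lower-triangular representative (coordinates s_ab, a >= b);
   i : column vector; j : row vector. *)
Definition rss_point (r s : 'M[C]_n) : bool :=
  [&& is_trig_mx r^T, is_trig_mx s &
      [forall a : 'I_n, forall b : 'I_n, (a != b) ==> (r a a != r b b)]].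

Record pt := Pt {
  pr : 'M[C]_n; ps : 'M[C]_n; pi : 'cV[C]_n; pj : 'rV[C]_n;
  p_rss : rss_point pr ps }.

(* Polynomial functions on the affine space b x b^* x C^n x (C^n)^*,
   restricted to the (Zariski dense) open set of points above:
   generated by constants and the coordinate functions. *)
Inductive poly_fun : (pt -> C) -> Prop :=
| pf_const (c : C) : poly_fun (fun _ => c)
| pf_r (a b : 'I_n) : (a <= b)%N -> poly_fun (fun x => pr x a b)
| pf_s (a b : 'I_n) : (b <= a)%N -> poly_fun (fun x => ps x a b)
| pf_i (a : 'I_n) : poly_fun (fun x => pi x a 0)
| pf_j (a : 'I_n) : poly_fun (fun x => pj x 0 a)
| pf_add f g : poly_fun f -> poly_fun g -> poly_fun (fun x => f x + g x)
| pf_mul f g : poly_fun f -> poly_fun g -> poly_fun (fun x => f x * g x).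

Definition Delta (x : pt) : C :=
  \prod_(a < n) \prod_(b < n | a != b) (pr x a a - pr x b b).

(* The coordinate ring C[T^*(b x C^n)^{rss}] = C[...][1/Delta],
   realised as the ring of functions p / Delta^k on the points. *)
Definition regular (f : pt -> C) : Prop :=
  exists p k, poly_fun p /\ forall x, f x = p x / Delta x ^+ k.

Definition prodL (r : 'M[C]_n) (iota : 'I_n) : 'M[C]_n :=
  foldr (fun k A => (r - (r k k)%:M) *m A) 1%:M
        [seq k <- enum 'I_n | k != iota].

Definition Lmat (r : 'M[C]_n) (iota : 'I_n) : 'M[C]_n :=
  (\tr (prodL r iota))^-1 *: prodL r iota.

Definition Ffun (iota : 'I_n) (x : pt) : C :=
  (pj x *m Lmat (pr x) iota *m pi x) 0 0.

(* f lies in the ideal of the coordinate ring generated by F_iota, iota < m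
   (0-based indices). *)
Definition in_ideal (m : nat) (f : pt -> C) : Prop :=
  exists a : 'I_n -> pt -> C, (forall l, regular (a l)) /\
    forall x, f x = \sum_(l < n | (l < m)%N) a l x * Ffun l x.

Definition regular_sequence_F : Prop :=
  (forall iota : 'I_n, forall g : pt -> C, regular g ->
      in_ideal iota (fun x => g x * Ffun iota x) -> in_ideal iota g)
  /\ ~ in_ideal n (fun _ => 1).

End Defs.

(* Main.v *)
From HB Require Import structures.
From mathcomp Require Import all_boot all_order all_algebra complex.
From mathcomp Require Import reals.
From mathcomp Require Import ring zify.
From Stdlib Require Import FunctionalExtensionality.
Require Import Defs.
Set Implicit Arguments. Unset Strict Implicit. Unset Printing Implicit Defensive.
Import Order.TTheory GRing.Theory Num.Theory.
Local Open Scope ring_scope.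



Section Mx.
Variable R : realType.
Local Notation C := (R[i]).
Variable m : nat.
Local Notation n := m.+1.

Definition upper (A : 'M[C]_n) := forall a b : 'I_n, (b < a)%N -> A a b = 0.

Lemma upperM A B : upper A -> upper B -> upper (A * B) /\ forall a, (A * B) a a = A a a * B a a.
Proof.
move=> uA uB; split.
  move=> a b ba; rewrite -mulmxE mxE big1 // => c _.
  case: (ltnP c a) => ca; first by rewrite uA // mul0r.
  by rewrite uB ?mulr0 //; apply: leq_trans ba ca.
move=> a; rewrite -mulmxE mxE (bigD1 a) //= big1 ?addr0 // => c ca.
case: (ltnP c a) => h; first by rewrite uA // mul0r.
by rewrite uB ?mulr0 // ltn_neqAle h eq_sym ca.
Qed.

Variable r : 'M[C]_n.
Hypothesis rU : upper r.
Hypothesis rD : forall a b : 'I_n, a != b -> r a a != r b b.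

Lemma horner_upper p : upper (horner_mx r p) /\ forall a, horner_mx r p a a = p.[r a a].
Proof.
elim/poly_ind: p => [|p c [IH1 IH2]].
  by rewrite rmorph0; split => [a b _|a]; rewrite ?mxE ?horner0.
rewrite rmorphD rmorphM /= horner_mx_X horner_mx_C.
have [h1 h2] := upperM IH1 rU.
split => [a b ba|a]; rewrite mxE [_%:M _ _]mxE.
  have -> : (a == b) = false by apply/eqP => e; move: ba; rewrite e ltnn.
  by rewrite h1 // add0r mulr0n.
by rewrite h2 IH2 eqxx mulr1n hornerMXaddC.
Qed.

Definition qpol (iota : 'I_n) : {poly C} :=
  \prod_(k <- [seq k <- enum 'I_n | k != iota]) ('X - (r k k)%:P).

Lemma prodL_horner iota : prodL r iota = horner_mx r (qpol iota).
Proof.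
rewrite /prodL /qpol; elim: (filter _ (enum 'I_n)) => [|k s IH] /=.
  by rewrite big_nil -polyC1 horner_mx_C.
by rewrite big_cons rmorphM /= -IH rmorphB /= horner_mx_X horner_mx_C mulmxE.
Qed.

Lemma qpolE iota x : (qpol iota).[x] = \prod_(k < n | k != iota) (x - r k k).
Proof.
rewrite /qpol horner_prod big_filter big_enum_cond /=.
by apply: eq_bigr => k _; rewrite hornerXsubC.
Qed.

Lemma char_poly_r : char_poly r = \prod_(k < n) ('X - (r k k)%:P).
Proof.
have ->: char_poly r = char_poly r^T.
  rewrite /char_poly -det_tr; congr (\det _); apply/matrixP => a b.
  by rewrite !mxE eq_sym.
rewrite char_poly_trig; last by apply/is_trig_mxP => a b ab; rewrite mxE rU.
by apply: eq_bigr => k _; rewrite mxE.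
Qed.

Lemma eigQ iota : r * prodL r iota = r iota iota *: prodL r iota.
Proof.
have := Cayley_Hamilton r; rewrite char_poly_r (bigD1 iota) //= rmorphM /=.
rewrite rmorphB /= horner_mx_X horner_mx_C.
have -> : \prod_(i < n | i != iota) ('X - (r i i)%:P) = qpol iota.
  by rewrite /qpol big_filter big_enum_cond.
rewrite -prodL_horner mulrBl => /eqP; rewrite subr_eq0 => /eqP ->.
by rewrite -mulmxE mul_scalar_mx.
Qed.

Lemma horner_eig p (X : 'M[C]_n) lam : r * X = lam *: X ->
  horner_mx r p * X = p.[lam] *: X.
Proof.
move=> rX; elim/poly_ind: p => [|p c IH].
  by rewrite rmorph0 mul0r horner0 scale0r.
rewrite rmorphD rmorphM /= horner_mx_X horner_mx_C mulrDl -mulrA rX.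
rewrite -scalerAr IH scalerA -mulmxE mul_scalar_mx hornerMXaddC scalerDl; congr (_ + _).
by rewrite mulrC.
Qed.

Definition cc iota := \prod_(k < n | k != iota) (r iota iota - r k k).

Lemma cc_neq0 iota : cc iota != 0.
Proof. by apply/prodf_neq0 => k kn; rewrite subr_eq0 eq_sym rD. Qed.

Lemma QQ l iota : prodL r l * prodL r iota = (if l == iota then cc iota else 0) *: prodL r iota.
Proof.
rewrite {1}prodL_horner (horner_eig _ (eigQ iota)) qpolE.
case: eqP => [->//|/eqP ne].
by rewrite (bigD1 iota) 1?eq_sym //= subrr mul0r.
Qed.

Lemma Q_upper iota : upper (prodL r iota) /\ forall a, prodL r iota a a = \prod_(k < n | k != iota) (r a a - r k k).
Proof.
rewrite prodL_horner; have [h1 h2] := horner_upper (qpol iota); split => // a.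
by rewrite h2 qpolE.
Qed.

Lemma trQ iota : \tr (prodL r iota) = cc iota.
Proof.
have [_ h] := Q_upper iota.
rewrite /mxtrace (bigD1 iota) //= big1 ?addr0 ?h // => a ai.
by rewrite h (bigD1 a) //= subrr mul0r.
Qed.

Definition P iota := Lmat r iota.

Lemma PE iota : P iota = (cc iota)^-1 *: prodL r iota.
Proof. by rewrite /P /Lmat trQ. Qed.

Lemma PP l iota : P l * P iota = (l == iota)%:R *: P iota.
Proof.
rewrite !PE -scalerAl -scalerAr QQ !scalerA; case: eqP => [->|_].
  by rewrite mulrC mulrA divff ?cc_neq0 // mul1r.
by rewrite mulr0 mul0r.
Qed.

Lemma Pdiag iota : P iota iota iota = 1.
Proof.
have [_ h] := Q_upper iota.
by rewrite PE mxE h -/(cc iota) mulVf ?cc_neq0.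
Qed.

Lemma rP iota : r * P iota = r iota iota *: P iota.
Proof. by rewrite PE -scalerAr eigQ scalerA mulrC -scalerA. Qed.

Lemma kerN iota (x : 'I_n -> C) :
  (forall a, \sum_c (r - (r iota iota)%:M) a c * x c = 0) -> x iota = 0 ->
  forall a, x a = 0.
Proof.
move=> hx0 xi.
have hx : forall a, \sum_c (r a c - (r iota iota)%:M a c) * x c = 0.
  by move=> a; rewrite -[RHS](hx0 a); apply: eq_bigr => c _; rewrite !mxE.
have key : forall k (a : 'I_n), (n - k <= a)%N -> x a = 0.
  elim=> [|k IH] a; first by rewrite subn0 leqNgt ltn_ord.
  move=> ha; case: (ltnP (n - k.+1) a) => [lt|le].
    by apply: IH; lia.
  have := hx a; rewrite (bigD1 a) //= big1 ?addr0.
    have [->//|ai] := eqVneq a iota.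
    rewrite !mxE eqxx mulr1n => /eqP; rewrite mulf_eq0 subr_eq0.
    by rewrite (negbTE (rD ai)) => /eqP.
  move=> c ca; case: (ltnP c a) => h.
    rewrite !mxE rU //.
    have -> : (a == c) = false by apply/eqP => e; move: h; rewrite e ltnn.
    by rewrite mulr0n subr0 mul0r.
  have ca' : (a < c)%N by rewrite ltn_neqAle h andbT; apply: contra ca => /eqP e; apply/eqP; exact: val_inj (esym e).
  by rewrite IH ?mulr0 //; lia.
by move=> a; apply: (key n); rewrite subnn.
Qed.

Lemma P_rank1 iota a b : P iota a b = P iota a iota * P iota iota b.
Proof.
have NP : (r - (r iota iota)%:M) * P iota = 0.
  by rewrite mulrBl rP -mulmxE mul_scalar_mx subrr.
apply/eqP; rewrite -subr_eq0 mulrC; apply/eqP.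
apply: (@kerN iota (fun c => P iota c b - P iota iota b * P iota c iota)); last first.
  by rewrite Pdiag mulr1 subrr.
move=> a'.
have e1 : ((r - (r iota iota)%:M) *m P iota) a' b = 0 by rewrite mulmxE NP mxE.
have e2 : ((r - (r iota iota)%:M) *m P iota) a' iota = 0 by rewrite mulmxE NP mxE.
rewrite [LHS]mxE in e1; rewrite [LHS]mxE in e2.
under eq_bigr do rewrite mulrBr.
rewrite big_split /= e1 sumrN.
under eq_bigr do rewrite mulrCA.
by rewrite -mulr_sumr e2 mulr0 subrr.
Qed.
End Mx.



Section Reg.
Variable R : realType.
Local Notation C := (R[i]).
Variable n : nat.
Local Notation pt := (pt R n).
Implicit Types f g : pt -> C.

Lemma pf_ext (f g : pt -> C) : (forall x, f x = g x) -> poly_fun g -> poly_fun f.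
Proof. by move=> e; have -> : f = g by apply: functional_extensionality. Qed.

Lemma pf_opp f : poly_fun f -> poly_fun (fun x : pt => - f x).
Proof.
move=> h; apply: (@pf_ext _ (fun x => (-1) * f x)); first by move=> x; rewrite mulN1r.
by apply: pf_mul => //; apply: pf_const.
Qed.

Lemma pf_prod (I : Type) (s : seq I) (Pr : pred I) (F : I -> pt -> C) :
  (forall i, poly_fun (F i)) -> poly_fun (fun x => \prod_(i <- s | Pr i) F i x).
Proof.
move=> h; elim: s => [|a s IH].
  by apply: (@pf_ext _ (fun _ => 1)); [move=> x; rewrite big_nil|apply: pf_const].
case Pa: (Pr a).
  apply: (@pf_ext _ (fun x => F a x * \prod_(i <- s | Pr i) F i x)); last by apply: pf_mul.
  by move=> x; rewrite big_cons Pa.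
by apply: (pf_ext _ IH) => x; rewrite big_cons Pa.
Qed.

Lemma pf_sum (I : Type) (s : seq I) (Pr : pred I) (F : I -> pt -> C) :
  (forall i, poly_fun (F i)) -> poly_fun (fun x => \sum_(i <- s | Pr i) F i x).
Proof.
move=> h; elim: s => [|a s IH].
  by apply: (@pf_ext _ (fun _ => 0)); [move=> x; rewrite big_nil|apply: pf_const].
case Pa: (Pr a).
  apply: (@pf_ext _ (fun x => F a x + \sum_(i <- s | Pr i) F i x)); last by apply: pf_add.
  by move=> x; rewrite big_cons Pa.
by apply: (pf_ext _ IH) => x; rewrite big_cons Pa.
Qed.

Lemma pf_exp f k : poly_fun f -> poly_fun (fun x : pt => f x ^+ k).
Proof.
move=> h; elim: k => [|k IH].
  by apply: (@pf_ext _ (fun _ => 1)); [move=> x; rewrite expr0|apply: pf_const].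
by apply: (@pf_ext _ (fun x => f x * f x ^+ k)); [move=> x; rewrite exprS|apply: pf_mul].
Qed.

Lemma upper_pr (x : pt) (a b : 'I_n) : (b < a)%N -> pr x a b = 0.
Proof.
move=> ba; case: x => r s i j /= /and3P [/is_trig_mxP h _ _].
by have := h b a ba; rewrite mxE.
Qed.

Lemma lower_ps (x : pt) (a b : 'I_n) : (a < b)%N -> ps x a b = 0.
Proof.
move=> ab; case: x => r s i j /= /and3P [_ /is_trig_mxP h _].
exact: h.
Qed.

Lemma diag_pr (x : pt) (a b : 'I_n) : a != b -> pr x a a != pr x b b.
Proof.
move=> ab; case: x => r s i j /= /and3P [_ _ /forallP h].
by have /forallP/(_ b)/implyP := h a; apply.
Qed.

Lemma pf_pr a b : poly_fun (fun x : pt => pr x a b).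
Proof.
case: (leqP a b) => ab; first exact: pf_r.
by apply: (@pf_ext _ (fun _ => 0)); [move=> x; rewrite upper_pr|apply: pf_const].
Qed.

Lemma pf_ps a b : poly_fun (fun x : pt => ps x a b).
Proof.
case: (leqP b a) => ab; first exact: pf_s.
by apply: (@pf_ext _ (fun _ => 0)); [move=> x; rewrite lower_ps|apply: pf_const].
Qed.

Lemma pf_Delta : poly_fun (@Delta R n).
Proof.
apply: (@pf_ext _ (fun x => \prod_(a < n) \prod_(b < n | a != b) (pr x a a - pr x b b))) => //.
apply: pf_prod => a; apply: pf_prod => b; apply: pf_add; first exact: pf_pr.
by apply: pf_opp; apply: pf_pr.
Qed.

Lemma Delta_neq0 (x : pt) : Delta x != 0.
Proof.
apply/prodf_neq0 => a _; apply/prodf_neq0 => b ab.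
by rewrite subr_eq0 diag_pr.
Qed.

Lemma reg_ext (f g : pt -> C) : (forall x, f x = g x) -> regular g -> regular f.
Proof. by move=> e [p [k [hp hk]]]; exists p, k; split => // x; rewrite e. Qed.

Lemma reg_pf f : poly_fun f -> regular f.
Proof. by move=> h; exists f, 0%N; split => // x; rewrite expr0 divr1. Qed.

Lemma reg_const c : regular (fun _ : pt => c).
Proof. exact/reg_pf/pf_const. Qed.

Lemma reg_divD f k : regular f -> regular (fun x : pt => f x / Delta x ^+ k).
Proof.
move=> [p [l [hp e]]]; exists p, (l + k)%N; split => // x.
by rewrite e exprD invfM mulrA.
Qed.

Lemma reg_add f g : regular f -> regular g -> regular (fun x : pt => f x + g x).
Proof.
move=> [p [k [hp ep]]] [q [l [hq eq]]].
exists (fun x => p x * Delta x ^+ l + q x * Delta x ^+ k), (k + l)%N; split.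
  by apply: pf_add; apply: pf_mul => //; apply: pf_exp; apply: pf_Delta.
move=> x; rewrite ep eq; have D0 := Delta_neq0 x.
rewrite exprD; field.
by rewrite !expf_neq0.
Qed.

Lemma reg_mul f g : regular f -> regular g -> regular (fun x : pt => f x * g x).
Proof.
move=> [p [k [hp ep]]] [q [l [hq eq]]].
exists (fun x => p x * q x), (k + l)%N; split; first exact: pf_mul.
by move=> x; rewrite ep eq exprD invfM; ring.
Qed.

Lemma reg_opp f : regular f -> regular (fun x : pt => - f x).
Proof.
move=> h; apply: (@reg_ext _ (fun x => (-1) * f x)); first by move=> x; rewrite mulN1r.
by apply: reg_mul => //; apply: reg_const.
Qed.

Lemma reg_sub f g : regular f -> regular g -> regular (fun x : pt => f x - g x).
Proof. by move=> hf hg; apply: reg_add => //; apply: reg_opp. Qed.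

Lemma reg_prod (I : Type) (s : seq I) (Pr : pred I) (F : I -> pt -> C) :
  (forall i, regular (F i)) -> regular (fun x => \prod_(i <- s | Pr i) F i x).
Proof.
move=> h; elim: s => [|a s IH].
  by apply: (@reg_ext _ (fun _ => 1)); [move=> x; rewrite big_nil|apply: reg_const].
case Pa: (Pr a).
  apply: (@reg_ext _ (fun x => F a x * \prod_(i <- s | Pr i) F i x)); last by apply: reg_mul.
  by move=> x; rewrite big_cons Pa.
by apply: (reg_ext _ IH) => x; rewrite big_cons Pa.
Qed.

Lemma reg_sum (I : Type) (s : seq I) (Pr : pred I) (F : I -> pt -> C) :
  (forall i, regular (F i)) -> regular (fun x => \sum_(i <- s | Pr i) F i x).
Proof.
move=> h; elim: s => [|a s IH].
  by apply: (@reg_ext _ (fun _ => 0)); [move=> x; rewrite big_nil|apply: reg_const].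
case Pa: (Pr a).
  apply: (@reg_ext _ (fun x => F a x + \sum_(i <- s | Pr i) F i x)); last by apply: reg_add.
  by move=> x; rewrite big_cons Pa.
by apply: (reg_ext _ IH) => x; rewrite big_cons Pa.
Qed.

Lemma reg_pr a b : regular (fun x : pt => pr x a b).
Proof. exact/reg_pf/pf_pr. Qed.
Lemma reg_ps a b : regular (fun x : pt => ps x a b).
Proof. exact/reg_pf/pf_ps. Qed.
Lemma reg_pi a b : regular (fun x : pt => pi x a b).
Proof. by rewrite (ord1 b); exact/reg_pf/pf_i. Qed.
Lemma reg_pj a b : regular (fun x : pt => pj x a b).
Proof. by rewrite (ord1 a); exact/reg_pf/pf_j. Qed.

Definition mx_reg p q (M : pt -> 'M[C]_(p, q)) := forall a b, regular (fun x => M x a b).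

Lemma mx_reg_mul p q s (A : pt -> 'M[C]_(p, q)) (B : pt -> 'M[C]_(q, s)) :
  mx_reg A -> mx_reg B -> mx_reg (fun x => A x *m B x).
Proof.
move=> hA hB a b; apply: (@reg_ext _ (fun x => \sum_c A x a c * B x c b)).
  by move=> x; rewrite mxE.
by apply: reg_sum => c; apply: reg_mul.
Qed.

Lemma mx_reg_add p q (A B : pt -> 'M[C]_(p, q)) :
  mx_reg A -> mx_reg B -> mx_reg (fun x => A x + B x).
Proof.
move=> hA hB a b; apply: (@reg_ext _ (fun x => A x a b + B x a b)).
  by move=> x; rewrite mxE.
exact: reg_add.
Qed.

Lemma mx_reg_opp p q (A : pt -> 'M[C]_(p, q)) :
  mx_reg A -> mx_reg (fun x => - A x).
Proof.
move=> hA a b; apply: (@reg_ext _ (fun x => - A x a b)).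
  by move=> x; rewrite mxE.
exact: reg_opp.
Qed.

Lemma mx_reg_scale p q (c : pt -> C) (A : pt -> 'M[C]_(p, q)) :
  regular c -> mx_reg A -> mx_reg (fun x => c x *: A x).
Proof.
move=> hc hA a b; apply: (@reg_ext _ (fun x => c x * A x a b)).
  by move=> x; rewrite mxE.
exact: reg_mul.
Qed.

Lemma mx_reg_scalar p (c : pt -> C) : regular c -> mx_reg (fun x => (c x)%:M : 'M[C]_p).
Proof.
move=> hc a b; apply: (@reg_ext _ (fun x => c x * (a == b)%:R)).
  by move=> x; rewrite mxE mulr_natr.
by apply: reg_mul => //; apply: reg_const.
Qed.

Lemma mx_reg_const p q (A : 'M[C]_(p, q)) : mx_reg (fun _ => A).
Proof. by move=> a b; apply: reg_const. Qed.

Lemma mx_reg_pr : mx_reg (fun x : pt => pr x).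
Proof. exact: reg_pr. Qed.

Lemma mx_reg_prodL iota : mx_reg (fun x : pt => prodL (pr x) iota).
Proof.
rewrite /prodL; elim: (filter _ _) => [|k s IH] /=.
  exact: mx_reg_const.
apply: mx_reg_mul => //; apply: mx_reg_add; first exact: mx_reg_pr.
by apply: mx_reg_opp; apply: mx_reg_scalar; apply: reg_pr.
Qed.
End Reg.



Section Comp.
Variable R : realType.
Local Notation C := (R[i]).
Variable n : nat.
Local Notation pt := (pt R n).
Implicit Types f g : pt -> C.

Lemma Delta_eq (x y : pt) : pr x = pr y -> Delta x = Delta y.
Proof. by rewrite /Delta => ->. Qed.

Lemma reg_comp (Phi : pt -> pt) :
  (forall x, pr (Phi x) = pr x) -> (forall x, ps (Phi x) = ps x) ->
  (forall a, regular (fun x => pi (Phi x) a 0)) ->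
  (forall a, regular (fun x => pj (Phi x) 0 a)) ->
  forall f, regular f -> regular (fun x => f (Phi x)).
Proof.
move=> er es hi hj f [p [k [hp ep]]].
have hp' : regular (fun x => p (Phi x)).
  elim: hp => {p ep}.
  - by move=> c; apply: reg_const.
  - by move=> a b _ /=; apply: (reg_ext _ (reg_pr _ a b)) => x; rewrite er.
  - by move=> a b _ /=; apply: (reg_ext _ (reg_ps _ a b)) => x; rewrite es.
  - exact: hi.
  - exact: hj.
  - by move=> f1 g1 _ h1 _ h2 /=; apply: reg_add.
  - by move=> f1 g1 _ h1 _ h2 /=; apply: reg_mul.
apply: (@reg_ext _ _ _ (fun x => p (Phi x) / Delta x ^+ k)); last exact: reg_divD.
by move=> x; rewrite ep (Delta_eq (er x)).
Qed.

Definition deg_bounded (Phi : C -> pt -> pt) f :=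
  exists d, forall x, exists q : {poly C}, (size q <= d)%N /\ forall t, f (Phi t x) = q.[t].

Lemma reg_deg (Phi : C -> pt -> pt) :
  (forall t x, pr (Phi t x) = pr x) -> (forall t x, ps (Phi t x) = ps x) ->
  (forall a, exists al be : pt -> C, forall t x, pi (Phi t x) a 0 = al x + t * be x) ->
  (forall a, exists al be : pt -> C, forall t x, pj (Phi t x) 0 a = al x + t * be x) ->
  forall f, regular f -> deg_bounded Phi f.
Proof.
move=> er es hi hj f [p [k [hp ep]]].
have lin : forall al be : pt -> C, deg_bounded Phi (fun x => al x + 0 * be x) ->
   True by [].
have hlin : forall (h : pt -> C) (al be : pt -> C), (forall t x, h (Phi t x) = al x + t * be x) ->
    deg_bounded Phi h.
  move=> h al be e; exists 2%N => x; exists ((be x) *: 'X + (al x)%:P); split.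
    apply: leq_trans (size_add _ _) _; rewrite geq_max; apply/andP; split.
      by apply: leq_trans (size_scale_leq _ _) _; rewrite size_polyX.
    by apply: leq_trans (size_polyC_leq1 _) _.
  by move=> t; rewrite e hornerD hornerZ hornerX hornerC addrC mulrC.
have hcst : forall (h : pt -> C), (forall t x, h (Phi t x) = h x) -> deg_bounded Phi h.
  move=> h e; apply: (hlin h h (fun _ => 0)) => t x; by rewrite e mulr0 addr0.
have hp' : deg_bounded Phi p.
  elim: hp => {p ep}.
  - by move=> c; apply: hcst.
  - by move=> a b _; apply: hcst => t x; rewrite er.
  - by move=> a b _; apply: hcst => t x; rewrite es.
  - by move=> a; have [al [be e]] := hi a; apply: hlin e.
  - by move=> a; have [al [be e]] := hj a; apply: hlin e.
  - move=> f1 g1 _ [d1 h1] _ [d2 h2]; exists (maxn d1 d2) => x.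
    have [q1 [s1 e1]] := h1 x; have [q2 [s2 e2]] := h2 x.
    exists (q1 + q2); split; last by move=> t; rewrite hornerD e1 e2.
    apply: leq_trans (size_add _ _) _; rewrite geq_max !leq_max.
    by rewrite s1 s2 orbT.
  - move=> f1 g1 _ [d1 h1] _ [d2 h2]; exists (d1 + d2)%N => x.
    have [q1 [s1 e1]] := h1 x; have [q2 [s2 e2]] := h2 x.
    exists (q1 * q2); split; last by move=> t; rewrite hornerM e1 e2.
    apply: leq_trans (size_mul_leq _ _) _.
    have := leq_add s1 s2; lia.
case: hp' => d hd; exists d => x; have [q [s e]] := hd x.
exists ((Delta x ^+ k)^-1 *: q); split.
  exact: leq_trans (size_scale_leq _ _) s.
by move=> t; rewrite ep e hornerZ mulrC (Delta_eq (er t x)).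
Qed.
End Comp.

Section Interp.
Variable R : realType.
Local Notation C := (R[i]).

Definition ell (d : nat) (k : 'I_d) (t : C) : C :=
  (\prod_(j < d | j != k) ((k.+1)%:R - (j.+1)%:R))^-1 * \prod_(j < d | j != k) (t - (j.+1)%:R).

Lemma interp (q : {poly C}) d : (size q <= d)%N ->
  forall t, q.[t] = \sum_(k < d) q.[(k.+1)%:R] * ell k t.
Proof.
move=> sq t; case: d sq => [|d] sq.
  by move: sq; rewrite leqn0 size_poly_eq0 => /eqP ->; rewrite horner0 big_ord0.
have inj : injective (fun j : nat => ((j.+1)%:R : C)).
  by move=> a b /eqP; rewrite eqr_nat eqSS => /eqP.
rewrite {1}(lagrange_gen (x := fun j : nat => ((j.+1)%:R : C)) _ inj sq) //.
rewrite horner_sum; apply: eq_bigr => k _.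
rewrite lagrangeE //= hornerM hornerC hornerM hornerC !horner_prod /ell.
congr (_ * (_ * _)).
  by congr (_^-1); apply: eq_bigr => j _; rewrite hornerXsubC.
by apply: eq_bigr => j _; rewrite hornerXsubC.
Qed.
End Interp.



Section Ideal.
Variable R : realType.
Local Notation C := (R[i]).
Variable n : nat.
Local Notation pt := (pt R n).
Implicit Types f g : pt -> C.

Lemma ideal_ext k f g : (forall x, f x = g x) -> in_ideal k g -> in_ideal k f.
Proof. by move=> e [a [ha h]]; exists a; split => // x; rewrite e. Qed.

Lemma ideal_zero k : in_ideal k (fun _ : pt => 0).
Proof.
exists (fun _ _ => 0); split => [l|x]; first exact: reg_const.
by rewrite big1 // => l _; rewrite mul0r.
Qed.

Lemma ideal_add k f g : in_ideal k f -> in_ideal k g -> in_ideal k (fun x => f x + g x).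
Proof.
move=> [a [ha hf]] [b [hb hg]]; exists (fun l x => a l x + b l x); split.
  by move=> l; apply: reg_add.
by move=> x; rewrite hf hg -big_split /=; apply: eq_bigr => l _; rewrite mulrDl.
Qed.

Lemma ideal_mul k c f : regular c -> in_ideal k f -> in_ideal k (fun x => f x * c x).
Proof.
move=> hc [a [ha hf]]; exists (fun l x => c x * a l x); split.
  by move=> l; apply: reg_mul.
by move=> x; rewrite hf mulr_suml; apply: eq_bigr => l _; rewrite mulrC mulrA.
Qed.

Lemma ideal_sum k d (F : 'I_d -> pt -> C) : (forall j, in_ideal k (F j)) ->
  in_ideal k (fun x => \sum_(j < d) F j x).
Proof.
elim: d F => [|d IH] F h.
  by apply: (ideal_ext (g := fun _ => 0)) => [x|]; rewrite ?big_ord0 //; apply: ideal_zero.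
apply: (ideal_ext (g := fun x => \sum_(j < d) F (widen_ord (leqnSn d) j) x + F ord_max x)).
  by move=> x; rewrite big_ord_recr.
by apply: ideal_add => //; apply: (IH (fun j => F (widen_ord (leqnSn d) j))).
Qed.
End Ideal.



Section Main.
Variable R : realType.
Local Notation C := (R[i]).
Variable m : nat.
Local Notation n := m.+1.
Local Notation pt := (pt R n).
Implicit Types f g : pt -> C.

Lemma upx (x : pt) : upper (pr x).
Proof. by move=> a b ba; apply: upper_pr. Qed.
Lemma dgx (x : pt) : forall a b : 'I_n, a != b -> pr x a a != pr x b b.
Proof. exact: diag_pr. Qed.

Lemma LLx (x : pt) l iota : Lmat (pr x) l *m Lmat (pr x) iota = (l == iota)%:R *: Lmat (pr x) iota.
Proof. by rewrite mulmxE; have := PP (upx x) (dgx x) l iota; rewrite /P. Qed.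

Lemma LL0 (x : pt) l iota : l != iota -> Lmat (pr x) l *m Lmat (pr x) iota = 0.
Proof. by move=> ne; rewrite LLx (negbTE ne) scale0r. Qed.

Lemma LLi (x : pt) iota : Lmat (pr x) iota *m Lmat (pr x) iota = Lmat (pr x) iota.
Proof. by rewrite LLx eqxx scale1r. Qed.

Lemma rank1x (x : pt) iota :
  Lmat (pr x) iota = col iota (Lmat (pr x) iota) *m row iota (Lmat (pr x) iota).
Proof.
apply/matrixP => a b; rewrite [RHS]mxE big_ord1 [col _ _ _ _]mxE [row _ _ _ _]mxE.
by have := P_rank1 (upx x) (dgx x) iota a b; rewrite /P.
Qed.

Lemma rowcolx (x : pt) iota :
  row iota (Lmat (pr x) iota) *m col iota (Lmat (pr x) iota) = 1%:M.
Proof.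
rewrite colE rowE -!mulmxA (mulmxA (Lmat _ _)) LLi -rowE -colE.
apply/matrixP => a b; rewrite (ord1 a) (ord1 b) !mxE /=.
by have := Pdiag (upx x) (dgx x) iota; rewrite /P /Lmat mxE.
Qed.

Variable iota : 'I_n.
Local Notation Lx x := (Lmat (pr x) iota).

Definition psi (t : C) (x : pt) : pt :=
  @Pt R n (pr x) (ps x) (pi x - Lx x *m pi x + t *: col iota (Lx x)) (pj x) (p_rss x).
Definition chi (t : C) (x : pt) : pt :=
  @Pt R n (pr x) (ps x) (pi x) (pj x - pj x *m Lx x + t *: row iota (Lx x)) (p_rss x).
Definition tauY (x : pt) := (row iota (Lx x) *m pi x) 0 0.
Definition tauX (x : pt) := (pj x *m col iota (Lx x)) 0 0.

Lemma psi_id x : psi (tauY x) x = x.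
Proof.
have e : pi x - Lx x *m pi x + tauY x *: col iota (Lx x) = pi x.
  rewrite {1}rank1x -mulmxA (_ : row iota (Lx x) *m pi x = (tauY x)%:M); last by rewrite /tauY -mx11_scalar.
  by rewrite mul_mx_scalar subrK.
by rewrite /psi e; case: x {e}.
Qed.

Lemma chi_id x : chi (tauX x) x = x.
Proof.
have e : pj x - pj x *m Lx x + tauX x *: row iota (Lx x) = pj x.
  rewrite {1}rank1x mulmxA (_ : pj x *m col iota (Lx x) = (tauX x)%:M); last by rewrite /tauX -mx11_scalar.
  by rewrite mul_scalar_mx subrK.
by rewrite /chi e; case: x {e}.
Qed.

Lemma F_psi l t x : l != iota -> Ffun l (psi t x) = Ffun l x.
Proof.
move=> ne; rewrite /Ffun /psi /= -!mulmxA.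
suff -> : Lmat (pr x) l *m (pi x - Lx x *m pi x + t *: col iota (Lx x)) = Lmat (pr x) l *m pi x by [].
rewrite !mulmxDr mulmxN mulmxA LL0 // mul0mx subr0 -scalemxAr colE mulmxA LL0 //.
by rewrite mul0mx scaler0 addr0.
Qed.

Lemma F_chi l t x : l != iota -> Ffun l (chi t x) = Ffun l x.
Proof.
move=> ne; rewrite /Ffun /chi /=.
suff -> : (pj x - pj x *m Lx x + t *: row iota (Lx x)) *m Lmat (pr x) l = pj x *m Lmat (pr x) l by [].
rewrite !mulmxDl mulNmx -mulmxA LL0 1?eq_sym // mulmx0 subr0 -scalemxAl rowE -mulmxA LL0 1?eq_sym //.
by rewrite mulmx0 scaler0 addr0.
Qed.

Lemma rowL (x : pt) : row iota (Lx x) *m Lx x = row iota (Lx x).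
Proof. by rewrite rowE -mulmxA LLi. Qed.

Lemma F_both c e x : Ffun iota (psi c (chi e x)) = e * c.
Proof.
rewrite /Ffun /psi /chi /=.
have -> : (pj x - pj x *m Lx x + e *: row iota (Lx x)) *m Lx x = e *: row iota (Lx x).
  by rewrite !mulmxDl mulNmx -mulmxA LLi subrr add0r -scalemxAl rowL.
rewrite -scalemxAl !mulmxDr mulmxN mulmxA rowL subrr add0r -scalemxAr rowcolx.
by rewrite !mxE /= mulr1n mulr1.
Qed.
End Main.



Section Final.
Variable R : realType.
Local Notation C := (R[i]).
Variable m : nat.
Local Notation n := m.+1.
Local Notation pt := (pt R n).
Implicit Types f g : pt -> C.
Variable iota : 'I_n.
Local Notation Lx x := (Lmat (pr x) iota).

Lemma reg_invtr : regular (fun x : pt => (\tr (prodL (pr x) iota))^-1).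
Proof.
pose rest (x : pt) := \prod_(a < n | a != iota) \prod_(b < n | a != b) (pr x a a - pr x b b).
apply: (@reg_ext _ _ _ (fun x => rest x / Delta x ^+ 1)); last first.
  apply: reg_divD; apply: reg_pf; apply: pf_prod => a; apply: pf_prod => b.
  by apply: pf_add; [apply: pf_pr|apply: pf_opp; apply: pf_pr].
move=> x; rewrite expr1 (trQ (upx x)) /Delta (bigD1 iota) //=.
have e2 : \prod_(b < n | iota != b) (pr x iota iota - pr x b b) = cc (pr x) iota.
  by apply: eq_bigl => b; rewrite eq_sym.
have D0 := Delta_neq0 x; rewrite /Delta (bigD1 iota) //= e2 in D0.
rewrite e2.
move: D0; rewrite mulf_eq0 negb_or => /andP [c0 r0].
by rewrite -/(rest x) invfM mulrCA divff // mulr1.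
Qed.

Lemma mx_reg_L : mx_reg (fun x : pt => Lx x).
Proof. by apply: mx_reg_scale; [apply: reg_invtr|apply: mx_reg_prodL]. Qed.

Lemma mx_reg_col : mx_reg (fun x : pt => col iota (Lx x)).
Proof. by move=> a b; apply: (reg_ext _ (mx_reg_L a iota)) => x; rewrite mxE. Qed.

Lemma mx_reg_row : mx_reg (fun x : pt => row iota (Lx x)).
Proof. by move=> a b; apply: (reg_ext _ (mx_reg_L iota b)) => x; rewrite mxE. Qed.

Lemma mx_reg_pi : mx_reg (fun x : pt => pi x).
Proof. exact: reg_pi. Qed.
Lemma mx_reg_pj : mx_reg (fun x : pt => pj x).
Proof. exact: reg_pj. Qed.

Lemma reg_psi t f : regular f -> regular (fun x => f (psi iota t x)).
Proof.
apply: reg_comp => // a.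
have : mx_reg (fun x : pt => pi x - Lx x *m pi x + t *: col iota (Lx x)).
  apply: mx_reg_add; first apply: mx_reg_add; first exact: mx_reg_pi.
    by apply: mx_reg_opp; apply: mx_reg_mul; [apply: mx_reg_L|apply: mx_reg_pi].
  by apply: mx_reg_scale; [apply: reg_const|apply: mx_reg_col].
by move/(_ a 0).
exact: reg_pj.
Qed.

Lemma reg_chi t f : regular f -> regular (fun x => f (chi iota t x)).
Proof.
apply: reg_comp => // a; first exact: reg_pi.
have : mx_reg (fun x : pt => pj x - pj x *m Lx x + t *: row iota (Lx x)).
  apply: mx_reg_add; first apply: mx_reg_add; first exact: mx_reg_pj.
    by apply: mx_reg_opp; apply: mx_reg_mul; [apply: mx_reg_pj|apply: mx_reg_L].
  by apply: mx_reg_scale; [apply: reg_const|apply: mx_reg_row].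
by move/(_ 0 a).
Qed.

Lemma addscaleE p q (A B : 'M[C]_(p, q)) (t : C) a b : (A + t *: B) a b = A a b + t * B a b.
Proof. by rewrite !mxE. Qed.

Lemma deg_psi f : regular f -> deg_bounded (psi iota) f.
Proof.
apply: reg_deg => // a.
  exists (fun x => (pi x - Lx x *m pi x) a 0), (fun x => col iota (Lx x) a 0).
  by move=> t x; rewrite /= addscaleE.
by exists (fun x => pj x 0 a), (fun _ => 0) => t x; rewrite mulr0 addr0.
Qed.

Lemma deg_chi f : regular f -> deg_bounded (chi iota) f.
Proof.
apply: reg_deg => // a.
  by exists (fun x => pi x a 0), (fun _ => 0) => t x; rewrite mulr0 addr0.
exists (fun x => (pj x - pj x *m Lx x) 0 a), (fun x => row iota (Lx x) 0 a).
by move=> t x; rewrite /= addscaleE.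
Qed.

Lemma interp_fam (Phi : C -> pt -> pt) (tau : pt -> C) f :
  deg_bounded Phi f -> (forall x, Phi (tau x) x = x) ->
  exists d, forall x, f x = \sum_(k < d) f (Phi (k.+1)%:R x) * ell k (tau x).
Proof.
move=> [d hd] hid; exists d => x; have [q [sq e]] := hd x.
rewrite -{1}(hid x) e (interp sq); apply: eq_bigr => k _; by rewrite e.
Qed.

Lemma reg_ell d (k : 'I_d) (tau : pt -> C) : regular tau -> regular (fun x => ell k (tau x)).
Proof.
move=> ht; rewrite /ell; apply: reg_mul; first exact: reg_const.
by apply: reg_prod => j; apply: reg_sub => //; apply: reg_const.
Qed.

Lemma reg_tauY : regular (@tauY R m iota).
Proof. by apply: mx_reg_mul; [apply: mx_reg_row|apply: mx_reg_pi]. Qed.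
Lemma reg_tauX : regular (@tauX R m iota).
Proof. by apply: mx_reg_mul; [apply: mx_reg_pj|apply: mx_reg_col]. Qed.

Lemma step (g : pt -> C) : regular g ->
  in_ideal iota (fun x => g x * Ffun iota x) -> in_ideal iota g.
Proof.
move=> hg [a [ha e]].
have [d hd] := interp_fam (deg_psi hg) (@psi_id _ _ iota).
apply: (ideal_ext hd); apply: ideal_sum => k; apply: ideal_mul.
  by apply: reg_ell; apply: reg_tauY.
set c := (k.+1)%:R : C.
have c0 : c != 0 by rewrite pnatr_eq0.
have hh : regular (fun x => g (psi iota c x)) by apply: reg_psi.
have [d' hd'] := interp_fam (deg_chi hh) (@chi_id _ _ iota).
apply: (ideal_ext hd'); apply: ideal_sum => k'; apply: ideal_mul.
  by apply: reg_ell; apply: reg_tauX.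
set c' := (k'.+1)%:R : C.
have c0' : c' != 0 by rewrite pnatr_eq0.
exists (fun l x => (c' * c)^-1 * a l (psi iota c (chi iota c' x))); split.
  move=> l; apply: reg_mul; first exact: reg_const.
  by apply: (@reg_chi c' (fun y => a l (psi iota c y))); apply: reg_psi.
move=> x; have := e (psi iota c (chi iota c' x)); rewrite F_both => e1.
have -> : g (psi iota c (chi iota c' x)) = (c' * c)^-1 * (g (psi iota c (chi iota c' x)) * (c' * c)).
  by rewrite mulrCA mulVf ?mulr1 // mulf_neq0.
rewrite e1 mulr_sumr; apply: eq_bigr => l hl.
have ne : l != iota by apply: contraTneq hl => ->; rewrite ltnn.
by rewrite F_psi // F_chi // mulrA.
Qed.
End Final.



Lemma not_unit (R : realType) (n : nat) : ~ in_ideal (R := R) (n := n) n (fun _ => 1).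
Proof.
pose r0 : 'M[R[i]]_n := diag_mx (\row_(a < n) (a : nat)%:R).
have h : rss_point r0 0.
  apply/and3P; split; first by rewrite tr_diag_mx diag_mx_is_trig.
    exact: mx0_is_trig.
  apply/forallP => a; apply/forallP => b; apply/implyP => ab.
  rewrite !mxE !eqxx !mulr1n eqr_nat; exact: ab.
pose x0 := @Pt R n r0 0 0 0 h.
move=> [a [_ e]]; have := e x0.
rewrite big1 => [/eqP|l _]; first by rewrite oner_eq0.
by rewrite /Ffun /= mulmx0 mxE mulr0.
Qed.

Theorem mainTheorem14 (R : realType) (n : nat) : regular_sequence_F R n.
Proof.
split; last exact: not_unit.
case: n => [|m] iota; first by case: iota.
exact: step.
Qed.
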